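(* In the setting described in the context, assume $t$ is prime, and let $O_{i_1},\dots,O_{i_{s(p,t)}}$ be representatives of the orbits of the action of $\langle\tau\rangle$ on $\{O_1,\dots,O_{t-1}\}$ (where $\tau(O_i)=O_{pi\bmod t}$). Then $$w_0+\frac{t-1}{s(p,t)}\sum_{j=1}^{s(p,t)}w_{i_j}=q+1,\qquad w_0^2+\frac{t-1}{s(p,t)}\sum_{j=1}^{s(p,t)}w_{i_j}^2=\frac{q^2+(t+1)q+1}{t}.$$
   Context: Let $q=p^h$ with $p$ prime, $h\ge1$. Let $\alpha$ be a primitive element of $\mathbb{F}_{q^3}$; the points of $PG(2,q)$ are the 1-dimensional $\mathbb{F}_q$-subspaces of $\mathbb{F}_{q^3}$, and $P_i$ denotes the point represented by $\alpha^i$, so $PG(2,q)=\{P_0,\dots,P_{q^2+q}\}$. Let $\tau:P_i\mapsto P_{ip\bmod(q^2+q+1)}$ (a collineation) and let $\ell_0$ be a line of $PG(2,q)$ fixed by $\tau$. Let $t$ be a positive divisor of $q^2+q+1$ and for $i=0,\dots,t-1$ let $O_i=\{P_u:u\equiv i\pmod t\}$. For $u=0,\dots,t-1$ let $w_u=|\ell_0\cap O_u|$. Let $s(p,t)$ be the number of orbits on $\mathbb{Z}_t\setminus\{0\}$ of the group generated by $i\mapsto p\cdot i\pmod t$. *)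

(* Defs.v *)
From HB Require Import structures.
From mathcomp Require Import all_boot all_order all_algebra.
Set Implicit Arguments. Unset Strict Implicit. Unset Printing Implicit Defensive.
Import GRing.Theory.

(* Number of points of PG(2,q): q^2+q+1, written as a successor so that
   'I_(npts q) is nonempty by construction. *)
Definition npts (q : nat) : nat := (q ^ 2 + q).+1.

Definition is_Fq_subspace (F : finFieldType) (q : nat) (W : {set F}) : Prop :=
  [/\ (0%R : F) \in W,
      (forall x y : F, x \in W -> y \in W -> (x + y)%R \in W) &
      (forall c x : F, (c ^+ q)%R = c -> x \in W -> (c * x)%R \in W)].

(* A line of PG(2,q): a 2-dimensional F_q-subspace, i.e. one with q^2 elements. *)
Definition is_line (F : finFieldType) (q : nat) (W : {set F}) : Prop :=
  is_Fq_subspace q W /\ #|W| = (q ^ 2)%N.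

(* Indices i (0 <= i < q^2+q+1) of the points P_i = <alpha^i> lying on W. *)
Definition line_pts (F : finFieldType) (q : nat) (alpha : F) (W : {set F})
  : {set 'I_(npts q)} := [set i : 'I_(npts q) | (alpha ^+ i)%R \in W].

Definition tau_pt (q p : nat) (i : 'I_(npts q)) : 'I_(npts q) :=
  Ordinal (ltn_pmod (i * p) (ltn0Sn (q ^ 2 + q))).

Definition wcount (F : finFieldType) (q t : nat) (alpha : F) (W : {set F})
  (u : nat) : nat :=
  #|[set i : 'I_(npts q) | (i %% t == u) && ((alpha ^+ i)%R \in W)]|.

(* Orbit of k in Z_t under the group generated by i |-> p i mod t
   (exponents e < t suffice, as the order of p mod t is < t). *)
Definition orbit_mul (p t : nat) (k : 'I_t) : {set 'I_t} :=
  [set j : 'I_t | [exists e : 'I_t, (j : nat) == k * p ^ e %% t]].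

Definition s_orb (p t : nat) : nat :=
  #|[set orbit_mul p k | k in [set k : 'I_t | (k : nat) != 0]]|.

Definition orbit_reps (p t : nat) (reps : seq 'I_t) : Prop :=
  [/\ uniq reps,
      (forall r, r \in reps -> (r : nat) != 0) &
      (forall k : 'I_t, (k : nat) != 0 ->
         count (fun r => k \in orbit_mul p r) reps = 1)].
Arguments tau_pt : clear implicits.
Arguments orbit_reps : clear implicits.
Arguments orbit_mul : clear implicits.

(* Main.v *)
Require Import Defs.
From HB Require Import structures.
From mathcomp Require Import all_boot all_order all_algebra all_field.
From mathcomp Require Import zify ring.
Set Implicit Arguments. Unset Strict Implicit. Unset Printing Implicit Defensive.
Import GRing.Theory.

Lemma qpos_eq r : ((r.+2)^3).-1 = (((r.+2)^2 + r.+2).+1 * (r.+2 - 1))%N.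
Proof. rewrite !expnS expn0; lia. Qed.


Lemma mod_cancel c t a b : coprime c t -> c * a = c * b %[mod t] -> a = b %[mod t].
Proof.
move=> ct.
wlog le_ab : a b / a <= b.
  move=> H; case: (leqP a b) => [ab|ba]; first exact: H.
  by move=> e; symmetry; apply: H; [exact: ltnW | symmetry].
move=> /eqP; rewrite eq_sym eqn_mod_dvd ?leq_mul2l ?le_ab ?orbT // -mulnBr.
rewrite Gauss_dvdr; last by rewrite coprime_sym.
move=> H; apply/eqP.
by rewrite eq_sym eqn_mod_dvd.
Qed.

Lemma count_div t m : 0 < t -> \sum_(k < t * m) (t %| k) = m.
Proof.
move=> t0; elim: m => [|m IH]; first by rewrite muln0 big_ord0.
rewrite mulnS addnC -(big_mkord xpredT (fun k => nat_of_bool (t %| k))).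
rewrite (big_cat_nat _ (n:=t * m)) ?leq_addr //= big_mkord IH.
rewrite -{1}(add0n (t * m)) big_addn addKn.
case: t t0 IH => // t _ IH; rewrite big_nat_recl // add0n dvdn_mulr //.
rewrite big1_seq; first by rewrite addn0 addn1.
move=> i /andP [_]; rewrite mem_iota => /andP[_ lt].
rewrite dvdn_addl ?dvdn_mulr // gtnNdvd //; rewrite ltnS; lia.
Qed.

Lemma card_set_sum (T : finType) (P : pred T) : #|[set x | P x]| = \sum_x P x.
Proof.
rewrite -sum1_card big_mkcond /=; apply: eq_bigr => x _; rewrite inE.
by case: (P x).
Qed.

Lemma sum_shift m (f : nat -> nat) : (forall k, f (k + m.+1) = f k) ->
  forall i, \sum_(k < m.+1) f (i + k) = \sum_(k < m.+1) f k.
Proof.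
move=> per; elim=> [|i IH]; first by apply: eq_bigr => k _; rewrite add0n.
rewrite -IH big_ord_recr big_ord_recl /= addnC; congr (_ + _).
  by rewrite addn0 addSn -addnS per.
by apply: eq_bigr => k _; rewrite /bump /= add1n addSn addnS.
Qed.

Lemma all_one m (f : nat -> nat) : (forall k, k < m -> f k <= 1) ->
  \sum_(k < m) f k = m -> forall k, k < m -> f k = 1.
Proof.
move=> le1 sm k km; apply/eqP; rewrite eqn_leq le1 //=; rewrite lt0n; apply/negP => /eqP f0.
have : \sum_(j < m) f j <= m.-1.
  rewrite (bigD1 (Ordinal km)) //= f0 add0n.
  apply: (@leq_trans (\sum_(j < m | j != Ordinal km) 1)).
    by apply: leq_sum => j _; exact: le1.
  by rewrite sum_nat_cond_const muln1 cardsE cardC1 card_ord.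
rewrite sm; case: m km {le1 sm} => // m _; by rewrite ltnn.
Qed.

Local Open Scope ring_scope.
Section Field.
Variables (p h : nat) (F : finFieldType) (alpha : F) (W : {set F}).
Hypotheses (pr_p : prime p) (h_gt0 : (0 < h)%N) (cardF : #|F| = ((p ^ h) ^ 3)%N)
  (prim : (#|F|.-1).-primitive_root alpha) (lineW : is_line (p ^ h) W).
Local Notation q := (p ^ h)%N.
Local Notation n := (npts (p ^ h)).
Local Notation N := (#|F|.-1).

Lemma q_gt1 : (1 < q)%N.
Proof. by rewrite -(expn0 p) ltn_exp2l // prime_gt1. Qed.

Lemma N_eq : N = (n * (q - 1))%N.
Proof.
rewrite cardF /npts; move: q_gt1; case: (p ^ h)%N => [|[|r]] //= _.
exact: qpos_eq.
Qed.

Lemma q1_gt0 : (0 < q - 1)%N.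
Proof. by rewrite subn_gt0 q_gt1. Qed.

Lemma n_gt0 : (0 < n)%N.
Proof. by []. Qed.

Lemma N_gt0 : (0 < N)%N.
Proof. by rewrite N_eq muln_gt0 n_gt0 q1_gt0. Qed.

Lemma alpha_eq i j : (alpha ^+ i == alpha ^+ j) = (i == j %[mod N]).
Proof. exact: eq_prim_root_expr. Qed.

Lemma alpha_neq0 : alpha != 0.
Proof.
apply/negP => /eqP a0; have := prim_expr_order prim; rewrite a0 expr0n.
by case: N N_gt0 => //= m _ /eqP; rewrite eq_sym oner_eq0.
Qed.

Lemma alphaX_neq0 i : alpha ^+ i != 0.
Proof. by rewrite expf_neq0 // alpha_neq0. Qed.

Lemma charF : p \in [pchar F].
Proof. by apply: (card_finPcharP (n := (h * 3)%N)) => //; rewrite expnM. Qed.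

Lemma frD (x y : F) : (x + y) ^+ q = x ^+ q + y ^+ q.
Proof. by apply: exprDn_pchar; rewrite pnatX (pnatE _ pr_p) charF. Qed.

Lemma fr0 : (0 : F) ^+ q = 0.
Proof. by rewrite expr0n expn_eq0 eqn0Ngt prime_gt0. Qed.

Lemma frN (x : F) : (- x) ^+ q = - (x ^+ q).
Proof.
have := frD x (- x); rewrite addrN fr0 => /eqP; rewrite eq_sym addr_eq0.
by move/eqP => ->; rewrite opprK.
Qed.

Lemma frB (x y : F) : (x - y) ^+ q = x ^+ q - y ^+ q.
Proof. by rewrite frD frN. Qed.

Lemma fr_inj (x y : F) : x ^+ q = y ^+ q -> x = y.
Proof.
move=> /eqP; rewrite -subr_eq0 -frB expf_eq0 subr_eq0 => /andP[_ /eqP] //.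
Qed.

Lemma fr3 (x : F) : x ^+ q ^+ q ^+ q = x.
Proof.
rewrite -!exprM -[X in _ = X](expf_card x) cardF; congr (_ ^+ _).
Qed.

Definition Fq : {set F} := [set c | c ^+ q == c].

Lemma alphaFq a : (alpha ^+ a \in Fq) = (n %| a)%N.
Proof.
rewrite inE -exprM alpha_eq.
have -> : (a * q = a + a * (q - 1))%N.
  by rewrite -mulnS subn1 prednK // ltnW // q_gt1.
rewrite -[X in _ == X %[mod _]](addn0 a) eqn_modDl mod0n -/(dvdn _ _) N_eq dvdn_pmul2r //.
exact: q1_gt0.
Qed.


Lemma alpha_surj (x : F) : x != 0 -> exists2 m, (m < N)%N & x = alpha ^+ m.
Proof.
move=> x0.
pose A := [set alpha ^+ (nat_of_ord i) | i : 'I_N].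
have cA : #|A| = N.
  rewrite card_imset ?card_ord // => i j /eqP; rewrite alpha_eq !modn_small //.
  by move/eqP/ord_inj.
have sA : A \subset [set~ 0].
  by apply/subsetP => y /imsetP[i _ ->]; rewrite !inE alphaX_neq0.
have : A == [set~ 0] by rewrite eqEcard sA /= cardsC1 cA leqnn.
move/eqP => eA; have : x \in A by rewrite eA !inE.
by case/imsetP => i _ ->; exists i.
Qed.

Lemma Wsub : is_Fq_subspace q W.
Proof. by case: lineW. Qed.

Lemma W0 : 0 \in W.
Proof. by case: Wsub. Qed.

Lemma WD x y : x \in W -> y \in W -> x + y \in W.
Proof. by case: Wsub => _ H _; apply: H. Qed.

Lemma WZ c x : c \in Fq -> x \in W -> c * x \in W.
Proof. by case: Wsub => _ _ H; rewrite inE => /eqP; apply: H. Qed.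

Lemma cardW : #|W| = (q ^ 2)%N.
Proof. by case: lineW. Qed.

Lemma n_dvd_N : (n %| N)%N.
Proof. by rewrite N_eq dvdn_mulr. Qed.

Lemma Pmod a b : a = b %[mod n] -> alpha ^+ b \in W -> alpha ^+ a \in W.
Proof.
move=> eab bW.
have e1 : alpha ^+ (a + N * b) = alpha ^+ a.
  by apply/eqP; rewrite alpha_eq addnC mulnC modnMDl.
have le : (b <= a + N * b)%N.
  by rewrite (leq_trans _ (leq_addl _ _)) // leq_pmull // N_gt0.
have dv : (n %| a + N * b - b)%N.
  rewrite -eqn_mod_dvd // N_eq -mulnA addnC mulnC modnMDl; exact/eqP.
rewrite -e1 -(subnK le) exprD; apply: WZ => //.
by rewrite alphaFq.
Qed.

Lemma Fq0 : 0 \in Fq.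
Proof. by rewrite inE fr0. Qed.

Lemma FqB a b : a \in Fq -> b \in Fq -> a - b \in Fq.
Proof. by rewrite !inE frB => /eqP -> /eqP ->. Qed.

Lemma FqM a b : a \in Fq -> b \in Fq -> a * b \in Fq.
Proof. by rewrite !inE exprMn => /eqP -> /eqP ->. Qed.

Lemma card_Fq : #|Fq| = q.
Proof.
pose A := [set alpha ^+ (n * nat_of_ord e) | e : 'I_(q - 1)].
have cA : #|A| = (q - 1)%N.
  rewrite card_imset ?card_ord // => i j /eqP; rewrite alpha_eq N_eq.
  rewrite -!muln_modr !modn_small // eqn_pmul2l //.
  by move/eqP/ord_inj.
have -> : Fq = 0 |: A.
  apply/setP => c; rewrite !inE; apply/idP/idP.
    case: (eqVneq c 0) => //= c0 cq.
    have [m lm em] := alpha_surj c0.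
    have : (n %| m)%N by rewrite -alphaFq -em inE.
    move/divnK => em'.
    apply/imsetP; have lt : (m %/ n < q - 1)%N.
      by rewrite ltn_divLR // mulnC -N_eq.
    exists (Ordinal lt) => //=; by rewrite em mulnC em'.
  case/orP => [/eqP -> | /imsetP [e _ ->]]; first by rewrite fr0.
  by move: (alphaFq (n * e)); rewrite inE dvdn_mulr // => ->.
rewrite cardsU1 cA.
have -> : (0 \notin A).
  by apply/imsetP => -[e _ /esym /eqP]; rewrite (negbTE (alphaX_neq0 _)).
by rewrite add1n subn1 prednK // ltnW // q_gt1.
Qed.

Definition indepb (x y : F) := [forall a : F, [forall b : F,
  ((a \in Fq) && (b \in Fq) && (a * x + b * y == 0)) ==> ((a == 0) && (b == 0))]].

Lemma spanW x y : x \in W -> y \in W -> indepb x y ->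
  forall z, z \in W -> exists a, exists b, [/\ a \in Fq, b \in Fq & z = a * x + b * y].
Proof.
move=> xW yW /forallP ind z zW.
pose f := fun ab : F * F => ab.1 * x + ab.2 * y.
have inj : {in setX Fq Fq &, injective f}.
  move=> [a b] [a' b'] /setXP[/= aF bF] /setXP[/= a'F b'F]; rewrite /f /= => e.
  have e0 : (a - a') * x + (b - b') * y = 0.
    by rewrite mulrBl mulrBl addrACA -opprD e subrr.
  have := ind (a - a'); move/forallP/(_ (b - b')).
  rewrite FqB // FqB // e0 eqxx /= !subr_eq0 => /andP[/eqP -> /eqP ->] //.
have sub : f @: setX Fq Fq \subset W.
  apply/subsetP => u /imsetP[[a b] /setXP[/= aF bF] ->]; rewrite /f /=.
  by apply: WD; apply: WZ.
have : f @: setX Fq Fq == W.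
  by rewrite eqEcard sub /= card_in_imset // cardsX card_Fq cardW leqnn.
move/eqP => eW; move: zW; rewrite -eW => /imsetP[[a b] /setXP[/= aF bF] ->].
by exists a, b.
Qed.

Lemma modq_lemma i j : (i + j * q = i * q + j %[mod N])%N -> (i = j %[mod n])%N.
Proof.
have eq1 k : (k * q = k + k * (q - 1))%N by rewrite -mulnS subn1 prednK // ltnW // q_gt1.
rewrite !eq1 => H.
have : ((i + j) + j * (q - 1) == (i + j) + i * (q - 1) %[mod N])%N.
  by rewrite -addnA H addnAC.
rewrite eqn_modDl N_eq -!muln_modl => /eqP /eqP.
by rewrite eqn_pmul2r ?q1_gt0 // => /eqP.
Qed.

Lemma root2 (a b r : F) : a \in Fq -> b \in Fq -> r * r = a + b * r ->
  r ^+ q * r ^+ q = a + b * r ^+ q.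
Proof.
rewrite !inE => /eqP aq /eqP bq e.
by rewrite -exprMn e frD exprMn aq bq.
Qed.

Lemma three_roots (a b r1 r2 r3 : F) : r1 * r1 = a + b * r1 -> r2 * r2 = a + b * r2 ->
  r3 * r3 = a + b * r3 -> r1 != r2 -> r3 = r1 \/ r3 = r2.
Proof.
move=> e1 e2 e3 ne.
have s12 : r1 + r2 = b.
  have : (r1 - r2) * (r1 + r2 - b) = 0.
    transitivity (r1 * r1 - r2 * r2 - b * (r1 - r2)); first by ring.
    by rewrite e1 e2; ring.
  move/eqP; rewrite mulf_eq0 subr_eq0 (negbTE ne) /= subr_eq0 => /eqP //.
case: (eqVneq r3 r1) => [-> | ne3]; first by left.
right.
have : (r1 - r3) * (r1 + r3 - b) = 0.
  transitivity (r1 * r1 - r3 * r3 - b * (r1 - r3)); first by ring.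
  by rewrite e1 e3; ring.
move/eqP; rewrite mulf_eq0 subr_eq0 eq_sym (negbTE ne3) /= subr_eq0 -s12 => /eqP.
by move/addrI.
Qed.

Lemma FqX_eq (a : F) : a \in Fq -> a ^+ q = a.
Proof. by rewrite inE => /eqP. Qed.

Lemma diff_unique (i1 i2 : 'I_n) K : (0 < K < n)%N ->
  alpha ^+ i1 \in W -> alpha ^+ (i1 + K) \in W ->
  alpha ^+ i2 \in W -> alpha ^+ (i2 + K) \in W -> i1 = i2.
Proof.
move=> /andP[K0 Kn] x1W g1W x2W g2W.
case: (eqVneq i1 i2) => // ne; exfalso.
set x1 := alpha ^+ i1 in x1W g1W *; set x2 := alpha ^+ i2 in x2W g2W *.
set g := alpha ^+ K.
have x10 : x1 != 0 by exact: alphaX_neq0.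
have x20 : x2 != 0 by exact: alphaX_neq0.
have gx1 : g * x1 \in W by rewrite /g /x1 -exprD addnC.
have gx2 : g * x2 \in W by rewrite /g /x2 -exprD addnC.
have ind : indepb x1 x2.
  apply/forallP => a; apply/forallP => b; apply/implyP => /andP[/andP[aF bF] /eqP e].
  case: (eqVneq a 0) => [a0 | a0].
    by move: e; rewrite a0 mul0r add0r => /eqP; rewrite mulf_eq0 (negbTE x20) orbF => /eqP ->; rewrite !eqxx.
  case: (eqVneq b 0) => [b0 | b0].
    by move: e; rewrite b0 mul0r addr0 => /eqP; rewrite mulf_eq0 (negbTE x10) orbF (negbTE a0).
  exfalso.
  have ea : a * x1 = - (b * x2) by apply/eqP; rewrite -addr_eq0 e.
  have ea' : a * x1 ^+ q = - (b * x2 ^+ q).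
    by rewrite -(FqX_eq aF) -(FqX_eq bF) -!exprMn ea frN.
  have H : a * b * (x1 * x2 ^+ q) = a * b * (x1 ^+ q * x2).
    transitivity ((a * x1) * (b * x2 ^+ q)); first by ring.
    rewrite ea; transitivity ((a * x1 ^+ q) * (b * x2)); last by ring.
    by rewrite ea'; ring.
  have ab0 : a * b != 0 by rewrite mulf_neq0.
  move: (mulfI ab0 H); rewrite /x1 /x2 -!exprM -!exprD => /eqP.
  rewrite alpha_eq => /eqP /modq_lemma; rewrite !modn_small ?ltn_ord // => E.
  by move: ne; rewrite (ord_inj E) eqxx.
have gW z : z \in W -> g * z \in W.
  move=> zW; have [a [b [aF bF ->]]] := spanW x1W x2W ind zW.
  rewrite mulrDr (mulrCA g a) (mulrCA g b); apply: WD; exact: WZ.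
have ggx : g * (g * x1) \in W by apply: gW.
have gq : g ^+ q = g.
  case: (boolP (indepb x1 (g * x1))) => [ind2 | /forallPn [a /forallPn [b]]].
    have [a [b [aF bF e]]] := spanW x1W gx1 ind2 ggx.
    have e1 : g * g = a + b * g.
      by apply: (mulIf x10); rewrite mulrDl -mulrA e mulrA.
    have e2 := root2 aF bF e1.
    have e3 := root2 aF bF e2.
    case: (eqVneq (g ^+ q) g) => // neq; exfalso.
    have neq2 : g != g ^+ q by rewrite eq_sym.
    case: (three_roots e1 e2 e3 neq2) => h3.
      by move: neq; rewrite -[X in _ != X](fr3 g) h3 eqxx.
    by move: neq; rewrite (fr_inj h3) eqxx.
  rewrite negb_imply => /andP[/andP[/andP[aF bF] /eqP e] nab].
  have e1 : a + b * g = 0.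
    by apply/eqP; move: e; rewrite mulrA -mulrDl => /eqP; rewrite mulf_eq0 (negbTE x10) orbF.
  have b0 : b != 0.
    by apply: contra nab => /eqP b0; move: e1; rewrite b0 mul0r addr0 => ->; rewrite !eqxx.
  have e2 : a + b * g ^+ q = 0.
    by rewrite -(FqX_eq aF) -(FqX_eq bF) -exprMn -frD e1 fr0.
  apply/eqP; move: e2; rewrite -e1 => /addrI /(mulfI b0) ->; by [].
have : g \in Fq by rewrite inE gq.
rewrite /g alphaFq.
by move/dvdn_leq => /(_ K0); rewrite leqNgt Kn.
Qed.

Lemma modnAM (d i e : nat) : ((i + d * e) %% d = i %% d)%N.
Proof. by rewrite mulnC addnC modnMDl. Qed.

Local Notation D := (line_pts (p ^ h) alpha W).
Local Notation chi m := (nat_of_bool (alpha ^+ m \in W)).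

Lemma card_D : #|D| = (q + 1)%N.
Proof.
pose phi := fun ie : 'I_n * 'I_(q - 1) => alpha ^+ (ie.1 + n * ie.2).
have inj : {in setX D setT &, injective phi}.
  move=> [i e] [i' e'] _ _; rewrite /phi /= => /eqP; rewrite alpha_eq => /eqP E.
  have E1 : ((i + n * e) %% n = (i' + n * e') %% n)%N.
    by rewrite -(modn_dvdm _ n_dvd_N) E modn_dvdm // n_dvd_N.
  move: E1; rewrite !modnAM !modn_small ?ltn_ord // => ii.
  move: E; rewrite ii => /eqP; rewrite eqn_modDl N_eq -!muln_modr !modn_small ?ltn_ord //.
  rewrite eqn_pmul2l // => /eqP ee.
  by congr (_, _); apply: ord_inj.
have im : phi @: setX D setT = W :\ 0.
  apply/setP => x; rewrite !inE; apply/idP/idP.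
    case/imsetP => -[i e] /setXP[/= iD _] ->; rewrite /phi /= alphaX_neq0 /=.
    apply: (Pmod (b := i)); first by rewrite modnAM.
    by move: iD; rewrite inE.
  case/andP => x0 xW; have [m lm em] := alpha_surj x0.
  have lt : (m %/ n < q - 1)%N by rewrite ltn_divLR // mulnC -N_eq.
  apply/imsetP; exists (Ordinal (ltn_pmod m n_gt0), Ordinal lt).
    rewrite !inE /= andbT; apply: (Pmod (b := m)); first by rewrite modn_mod.
    by rewrite -em.
  by rewrite /phi /= em mulnC addnC -divn_eq.
have c1 : #|W :\ 0| = (q ^ 2 - 1)%N by rewrite -cardW (cardsD1 0 W) W0 add1n subn1.
move: c1; rewrite -im card_in_imset // cardsX cardsT card_ord.
have -> : (q ^ 2 - 1 = (q + 1) * (q - 1))%N.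
  by move: q_gt1; case: (p ^ h)%N => [|[|r]] // _; rewrite !expnS expn0; lia.
by move/eqP; rewrite eqn_pmul2r ?q1_gt0 // => /eqP.
Qed.

Lemma chi_per k : chi (k + n) = chi k.
Proof.
have e : (k + n = k %[mod n])%N by rewrite modnDr.
have e' : (k = k + n %[mod n])%N by rewrite modnDr.
case: (boolP (alpha ^+ k \in W)) => kW.
  by rewrite (Pmod e kW).
case: (boolP (alpha ^+ (k + n) \in W)) => // knW.
by move: kW; rewrite (Pmod e' knW).
Qed.

Lemma card_D_sum : #|D| = \sum_(i < n) chi i.
Proof. by rewrite card_set_sum. Qed.

Definition Ek k := \sum_(i < n) chi i * chi (i + k).

Lemma Ek_le1 k : (0 < k < n)%N -> (Ek k <= 1)%N.
Proof.
move=> kn.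
have -> : Ek k = #|[set i : 'I_n | (alpha ^+ i \in W) && (alpha ^+ (i + k) \in W)]|.
  rewrite card_set_sum; apply: eq_bigr => i _.
  by case: (alpha ^+ i \in W); case: (alpha ^+ (i + k) \in W).
apply/card_le1P => i; rewrite inE => /andP[iW ikW] j; rewrite !inE.
apply/idP/idP; last by move/eqP ->; rewrite iW ikW.
case/andP => jW jkW; apply/eqP; exact: (diff_unique kn jW jkW iW ikW).
Qed.

Lemma sum_Ek : (\sum_(k < n) Ek k = #|D| * #|D|)%N.
Proof.
rewrite /Ek exchange_big /= card_D_sum big_distrl /=.
apply: eq_bigr => i _; rewrite -big_distrr /=; congr (_ * _).
by rewrite (sum_shift chi_per).
Qed.

Lemma Ek0 : Ek 0 = #|D|.
Proof.
rewrite card_D_sum; apply: eq_bigr => i _; rewrite addn0.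
by case: (alpha ^+ i \in W).
Qed.

Lemma Ek1 k : (0 < k < n)%N -> Ek k = 1%N.
Proof.
move=> /andP[k0 kn].
have S : (\sum_(j < (q ^ 2 + q)) Ek j.+1 = q ^ 2 + q)%N.
  have := sum_Ek; rewrite big_ord_recl Ek0 card_D /= => H.
  have : ((q + 1) + \sum_(j < (q ^ 2 + q)) Ek (bump 0 j) = (q + 1) * (q + 1))%N by [].
  rewrite /bump /=. 
  have -> : ((q + 1) * (q + 1) = (q + 1) + (q ^ 2 + q))%N by rewrite expnS expn1; lia.
  move/eqP; rewrite eqn_add2l => /eqP E; rewrite -[X in _ = X]E; apply: eq_bigr => j _; by rewrite add1n.
have le1 : forall j, (j < q ^ 2 + q)%N -> (Ek j.+1 <= 1)%N.
  by move=> j jm; apply: Ek_le1; rewrite ltnS.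
have := @all_one _ (fun j => Ek j.+1) le1 S k.-1.
move=> H2; rewrite -(prednK k0); apply: H2.
by rewrite -ltnS prednK.
Qed.

Local Open Scope nat_scope.
Lemma nb_and (a b : bool) : nat_of_bool (a && b) = a * b.
Proof. by case: a; case: b. Qed.

Lemma sum_mod_one t (ht : (0 < t)%N) (i : nat) (F0 : nat -> nat) :
  (\sum_(u < t) (i %% t == u) * F0 u = F0 (i %% t))%N.
Proof.
rewrite (bigD1 (Ordinal (ltn_pmod i ht))) //= eqxx mul1n big1 ?addn0 //.
move=> u nu; suff -> : (i %% t == u) = false by rewrite mul0n.
apply: contraNF nu => /eqP e; apply/eqP/val_inj; by rewrite /= e.
Qed.

Lemma w_sum t : (0 < t)%N -> (\sum_(u < t) wcount q t alpha W u = q + 1)%N.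
Proof.
move=> ht; rewrite /wcount.
under eq_bigr do rewrite card_set_sum.
rewrite exchange_big /= -card_D card_D_sum; apply: eq_bigr => i _.
have := sum_mod_one ht i (fun _ => chi i); rewrite /= => <-.
by apply: eq_bigr => u _; rewrite nb_and.
Qed.

Lemma w_sum2 t : (0 < t)%N -> (t %| n)%N ->
  (\sum_(u < t) (wcount q t alpha W u) ^ 2 = q + n %/ t)%N.
Proof.
move=> ht tn; rewrite /wcount.
transitivity (\sum_(u < t) \sum_(i < n) \sum_(j < n)
   (((i %% t == u) * chi i) * ((j %% t == u) * chi j)))%N.
  apply: eq_bigr => u _; rewrite card_set_sum -mulnn big_distrl /=.
  apply: eq_bigr => i _; rewrite big_distrr /=; apply: eq_bigr => j _.
  by rewrite !nb_and.
rewrite exchange_big /=.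
transitivity (\sum_(i < n) chi i * \sum_(j < n) ((j %% t == i %% t) * chi j))%N.
  apply: eq_bigr => i _; rewrite exchange_big big_distrr /=; apply: eq_bigr => j _.
  have := sum_mod_one ht i (fun u => chi i * ((j %% t == u) * chi j))%N.
  rewrite /= => <-; apply: eq_bigr => u _.
  by case: (i %% t == u); rewrite ?mul1n ?mul0n.
have per i0 : forall m, ((m + n) %% t == i0 %% t) * chi (m + n) = ((m %% t == i0 %% t) * chi m)%N.
  move=> m; rewrite chi_per; congr ((_ == _) * _)%N.
  by rewrite -modnDm (eqP (tn : (n %% t == 0)%N)) addn0 modn_mod.
transitivity (\sum_(i < n) chi i * \sum_(k < n) ((t %| k) * chi (i + k)))%N.
  apply: eq_bigr => i _; congr (_ * _)%N.
  rewrite -(sum_shift (per i) i); apply: eq_bigr => k _.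
  congr (nat_of_bool _ * _)%N.
  by rewrite -{2}(addn0 i) eqn_modDl mod0n.
transitivity (\sum_(k < n) (t %| k) * Ek k)%N.
  rewrite /Ek; under eq_bigr do rewrite big_distrr /=.
  rewrite exchange_big /=; apply: eq_bigr => k _; rewrite big_distrr /=.
  by apply: eq_bigr => i _; rewrite mulnCA.
have cnt : (\sum_(k < n) (t %| k) = n %/ t)%N.
  rewrite -(big_mkord xpredT (fun k => nat_of_bool (t %| k))).
  rewrite -{1}(divnK tn) mulnC.
  by rewrite big_mkord count_div.
move: cnt; rewrite !big_ord_recl /= dvdn0 Ek0 card_D mul1n.
have -> : (\sum_(i < q ^ 2 + q) (t %| bump 0 i) * Ek (bump 0 i) =
          \sum_(i < q ^ 2 + q) (t %| bump 0 i))%N.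
  by apply: eq_bigr => i _; rewrite Ek1 ?muln1 // /bump /= add1n ltnS ltn_ord.
move=> <-; by rewrite addnA.
Qed.

Lemma w_le t : (0 < t) -> (t %| n) -> tau_pt q p @: D = D ->
  forall x, wcount q t alpha W (x %% t) <= wcount q t alpha W ((x * p) %% t).
Proof.
move=> ht tn tauD x; rewrite /wcount.
set A := [set i : 'I_n | _].
have injD : {in D &, injective (tau_pt q p)} by apply/imset_injP; rewrite tauD.
have sAD : {subset A <= D} by move=> i; rewrite !inE => /andP[_].
rewrite -(card_in_imset (sub_in2 sAD injD)).
apply: subset_leq_card; apply/subsetP => j /imsetP [i iA ->].
move: iA; rewrite !inE => /andP [/eqP it iW].
have : tau_pt q p i \in tau_pt q p @: D by apply: imset_f; rewrite inE.
rewrite tauD inE => ->; rewrite andbT /tau_pt /=.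
by rewrite modn_dvdm // -modnMml it modnMml.
Qed.

End Field.

Local Open Scope nat_scope.
Section Orbits.
Variables (p t : nat) (f : nat -> nat).
Hypotheses (pr_t : prime t) (cpt : coprime p t).

Lemma t_gt1 : 1 < t. Proof. exact: prime_gt1. Qed.
Lemma t_gt0 : 0 < t. Proof. exact: prime_gt0. Qed.

Lemma fermat1 : p ^ (t - 1) = 1 %[mod t].
Proof.
apply: (@mod_cancel p); first by [].
rewrite muln1 -expnS subn1 prednK ?t_gt0 //; exact: fermat_little.
Qed.

Lemma pow_mod E : p ^ E = p ^ (E %% (t - 1)) %[mod t].
Proof.
have -> : p ^ E = (p ^ (t - 1)) ^ (E %/ (t - 1)) * p ^ (E %% (t - 1)).
  by rewrite -expnM -expnD mulnC -divn_eq.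
rewrite -modnMml -modnXm fermat1.
by rewrite (modn_small t_gt1) exp1n (modn_small t_gt1) mul1n.
Qed.

Hypothesis f_le : forall x, f (x %% t) <= f ((x * p) %% t).

Lemma f_le_pow x e : f (x %% t) <= f ((x * p ^ e) %% t).
Proof.
elim: e => [|e IH]; first by rewrite expn0 muln1.
by apply: (leq_trans IH); rewrite expnSr mulnA f_le.
Qed.

Lemma f_inv x : f ((x * p) %% t) = f (x %% t).
Proof.
apply/eqP; rewrite eqn_leq f_le andbT.
have := f_le_pow (x * p) (t - 2); rewrite -mulnA -expnS.
have -> : (t - 2).+1 = t - 1 by move: t_gt1; lia.
move=> H; apply: (leq_trans H); rewrite -modnMmr fermat1 modnMmr muln1 leqnn //.
Qed.

Lemma f_inv_pow x e : f ((x * p ^ e) %% t) = f (x %% t).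
Proof.
elim: e => [|e IH]; first by rewrite expn0 muln1.
by rewrite expnSr mulnA f_inv IH.
Qed.

End Orbits.

Section Orbits2.
Variables (p t : nat) (reps : seq 'I_t).
Hypotheses (pr_t : prime t) (cpt : coprime p t) (hreps : orbit_reps p t reps).

Local Notation Orb := (orbit_mul p t).

Lemma r_in_orb (r : 'I_t) : r \in Orb r.
Proof.
rewrite inE; apply/existsP; exists (Ordinal (t_gt0 pr_t)) => /=.
by rewrite expn0 muln1 modn_small.
Qed.

Lemma orbP (r j : 'I_t) : reflect (exists e, (j : nat) = (r * p ^ e) %% t) (j \in Orb r).
Proof.
rewrite inE; apply: (iffP existsP) => [[e /eqP ->] | [e ->]]; first by exists e.
have lt : e %% (t - 1) < t.
  by apply: (@leq_trans (t - 1)); [rewrite ltn_pmod // subn_gt0 t_gt1 | rewrite leq_subr].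
exists (Ordinal lt) => /=.
by rewrite -modnMmr (pow_mod pr_t cpt) modnMmr.
Qed.

Lemma orb_sub (k r : 'I_t) : k \in Orb r -> Orb k \subset Orb r.
Proof.
case/orbP => e ek; apply/subsetP => j /orbP [e' je].
apply/orbP; exists (e + e'); by rewrite je ek modnMml expnD mulnA.
Qed.

Lemma coprime_small (k : 'I_t) : (k : nat) != 0 -> coprime k t.
Proof.
move=> k0; rewrite coprime_sym prime_coprime // gtnNdvd //.
by rewrite lt0n.
Qed.

Definition Pset : {set 'I_t} :=
  [set Ordinal (ltn_pmod (p ^ (nat_of_ord e)) (t_gt0 pr_t)) | e : 'I_t].

Definition mulk (k : 'I_t) (j : 'I_t) : 'I_t := Ordinal (ltn_pmod (k * j) (t_gt0 pr_t)).

Lemma orb_card (k : 'I_t) : (k : nat) != 0 -> #|Orb k| = #|Pset|.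
Proof.
move=> k0.
have -> : Orb k = mulk k @: Pset.
  apply/setP => j; rewrite inE; apply/existsP/imsetP.
    case => e /eqP ej; exists (Ordinal (ltn_pmod (p ^ (nat_of_ord e)) (t_gt0 pr_t))).
      by apply/imsetP; exists e.
    by apply: val_inj; rewrite /= ej modnMmr.
  case => x /imsetP [e _ ->] ->; exists e; by rewrite /= modnMmr.
apply: card_imset => a b /(congr1 val) /= /eqP.
move/eqP/(mod_cancel (coprime_small k0)); rewrite !modn_small // => ab.
exact: val_inj.
Qed.

Lemma orb_nonzero (r j : 'I_t) : (r : nat) != 0 -> j \in Orb r -> (j : nat) != 0.
Proof.
move=> r0 /orbP [e ->]; apply/negP => /eqP /eqP.
rewrite -/(dvdn t (r * p ^ e)) Gauss_dvdl; last by rewrite coprimeXr // coprime_sym.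
by rewrite gtnNdvd // lt0n.
Qed.

Lemma orb_eq (k r : 'I_t) : (k : nat) != 0 -> (r : nat) != 0 -> k \in Orb r -> Orb k = Orb r.
Proof.
move=> k0 r0 kr; apply/eqP; rewrite eqEcard orb_sub //= orb_card // orb_card //.
Qed.

Lemma reps_nz (r : 'I_t) : r \in reps -> (r : nat) != 0.
Proof. by case: hreps => _ H _; apply: H. Qed.

Lemma count_one (k : 'I_t) : (k : nat) != 0 -> count (fun r => k \in Orb r) reps = 1.
Proof. by case: hreps => _ _ H; apply: H. Qed.

Lemma orb_inj : {in reps &, injective Orb}.
Proof.
move=> r1 r2 r1i r2i e; apply/eqP; apply/negPn/negP => ne.
have := count_one (reps_nz r1i); rewrite -size_filter.
have sz : 2 <= size (filter (fun r => r1 \in Orb r) reps).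
  have -> : 2 = size [:: r1; r2] by [].
  apply: uniq_leq_size; first by rewrite /= inE ne.
  move=> x; rewrite !inE => /orP [/eqP -> | /eqP ->]; rewrite mem_filter.
    by rewrite r_in_orb r1i.
  by rewrite -e r_in_orb r2i.
by move=> H; move: sz; rewrite H.
Qed.

Lemma s_orb_eq : s_orb p t = size reps.
Proof.
have uq : uniq reps by case: hreps.
rewrite /s_orb.
have -> : [set Orb k | k in [set k : 'I_t | (k : nat) != 0]] = [set Orb r | r in reps].
  apply/setP => S; apply/imsetP/imsetP.
    case=> k; rewrite inE => k0 ->.
    have : 0 < count (fun r => k \in Orb r) reps by rewrite count_one.
    rewrite -has_count => /hasP [r ri kr].
    by exists r => //; apply: orb_eq => //; apply: reps_nz.
  case=> r ri ->; exists r => //; rewrite inE; exact: reps_nz.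
rewrite card_in_imset; last exact: orb_inj.
exact/card_uniqP.
Qed.

Variable f : nat -> nat.
Hypothesis f_inv : forall x e, f ((x * p ^ e) %% t) = f (x %% t).

Lemma f_const (r u : 'I_t) : u \in Orb r -> f u = f r.
Proof.
case/orbP => e ->; rewrite f_inv modn_small //.
Qed.

Lemma sum_orbits :
  \sum_(u < t | (u : nat) != 0) f u = #|Pset| * \sum_(r <- reps) f r.
Proof.
transitivity (\sum_(u < t | (u : nat) != 0) \sum_(r <- reps) (u \in Orb r) * f u).
  apply: eq_bigr => u u0; rewrite -big_distrl /= -[X in X = _]mul1n -(count_one u0).
  rewrite -sum1_count big_mkcond /=; congr (_ * _).
rewrite exchange_big big_distrr /=; apply: eq_big_seq => r ri.
rewrite -(orb_card (reps_nz ri)) -sum_nat_const.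
rewrite big_mkcond /= [RHS]big_mkcond /=; apply: eq_bigr => u _.
case: (boolP (u \in Orb r)) => ur.
  by rewrite (orb_nonzero (reps_nz ri) ur) mul1n (f_const ur).
by case: (_ != 0).
Qed.

End Orbits2.

Lemma d_size p t (reps : seq 'I_t) (pr_t : prime t) (cpt : coprime p t)
  (hreps : orbit_reps p t reps) : #|Pset p pr_t| * size reps = t - 1.
Proof.
have := @sum_orbits p t reps pr_t cpt hreps (fun _ => 1) (fun _ _ => erefl).
rewrite big_const_seq count_predT iter_addn_0 mul1n => <-.
rewrite sum_nat_cond_const muln1.
have -> : [set x : 'I_t | (x : nat) != 0] = [set~ Ordinal (t_gt0 pr_t)].
  apply/setP => x; rewrite !inE; apply/negb_inj; rewrite !negbK.
  by case: x => -[|m] Hm.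
by rewrite cardsC1 card_ord subn1.
Qed.

Import Num.Theory.
Local Open Scope ring_scope.

Theorem corollary2 (p h t : nat) (F : finFieldType) (alpha : F)
  (W : {set F}) (reps : seq 'I_t) :
  prime p -> (0 < h)%N -> #|F| = ((p ^ h) ^ 3)%N ->
  (#|F|.-1).-primitive_root alpha ->
  is_line (p ^ h) W ->
  (tau_pt (p ^ h) p) @: line_pts (p ^ h) alpha W = line_pts (p ^ h) alpha W ->
  prime t -> (t %| npts (p ^ h))%N ->
  orbit_reps p t reps ->
  let q := (p ^ h)%N in
  let w := wcount q t alpha W in
  (w 0%N)%:R + (t - 1)%:R / (s_orb p t)%:R * \sum_(r <- reps) (w r)%:R
    = (q + 1)%:R :> rat
  /\
  ((w 0%N) ^ 2)%:R + (t - 1)%:R / (s_orb p t)%:R * \sum_(r <- reps) ((w r) ^ 2)%:R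
    = (q ^ 2 + (t + 1) * q + 1)%:R / t%:R :> rat.
Proof.
move=> pr_p h0 cardF prim lineW tauD pr_t tn hreps q w.
have ht := t_gt0 pr_t.
have cpt : coprime p t.
  rewrite prime_coprime // dvdn_prime2 //; apply/negP => /eqP pt.
  have pq : (p %| p ^ h)%N by apply: dvdn_exp.
  have : (p %| npts (p ^ h))%N by rewrite {1}pt.
  rewrite /npts -addn1 dvdn_addr; last by rewrite dvdn_add // expnS dvdn_mulr.
  by rewrite dvdn1 => /eqP p1; move: pr_p; rewrite p1.
have fle := w_le ht tn tauD.
have winv := f_inv_pow pr_t cpt fle.
have w2inv : forall x e, ((w ((x * p ^ e) %% t)) ^ 2 = (w (x %% t)) ^ 2)%N.
  by move=> x e; rewrite /w /q winv.
set d := #|Pset p pr_t|.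
have ds := d_size pr_t cpt hreps.
have so := s_orb_eq pr_t cpt hreps.
have so0 : (size reps != 0)%N.
  apply/negP => /eqP s0; move: ds; rewrite s0 muln0 => /esym/eqP; rewrite subn_eq0 leqNgt.
  by rewrite prime_gt1.
have coef : (t - 1)%:R / (s_orb p t)%:R = d%:R :> rat.
  by rewrite -ds so natrM mulfK // pnatr_eq0.
have split0 (g : nat -> nat) : (\sum_(u < t) g u = g 0 + \sum_(u < t | (u : nat) != 0) g u)%N.
  rewrite (bigD1 (Ordinal ht)) //=; congr (_ + _); apply: eq_bigl => u.
have S1 := w_sum pr_p h0 cardF prim lineW ht.
have S2 := w_sum2 pr_p h0 cardF prim lineW ht tn.
have O1 := sum_orbits pr_t cpt hreps winv.
have O2 := @sum_orbits p t reps pr_t cpt hreps (fun u => (w u ^ 2)%N) w2inv.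
rewrite coef -!natr_sum -!natrM -!natrD; split.
  by rewrite -O1 -split0 S1.
rewrite -O2 -(split0 (fun u => w u ^ 2)%N) S2.
have -> : (q ^ 2 + (t + 1) * q + 1 = (q + npts q %/ t) * t)%N.
  rewrite [RHS]mulnDl divnK // /npts; lia.
by rewrite natrM mulfK // pnatr_eq0 -lt0n.
Qed.
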